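(* Let $f=\prod_{i=1}^n(y-a_i)\in\overline K[y]$ be reduced ($a_i$ pairwise distinct), of degree $n\ge2$. Let $w=\sum_{i=1}^nw_i\varepsilon_i\in\overline{\mathcal F}$. Then every solution $(u,v)\in\overline{\mathcal E}\times\overline{\mathcal E}$, $u=\sum_iu_i\varepsilon_i$, of $uf'_x+vf'_y=wf$ satisfies $v=\sum_{i=1}^nu_ia'_i\varepsilon_i$ and, for $1\le i\le n$, $$w_i=\Bigl(\sum_{j\ne i}\frac{a'_i-a'_j}{a_i-a_j}\Bigr)u_i-\sum_{j\neq i}\frac{a'_i-a'_j}{a_i-a_j}\,u_j.$$
   Context: $\overline K=\bigcup_{d\ge1}\mathbf C[[x^{1/d}]][1/x]$, $'$ denotes $d/dx$ and $f'_x,f'_y$ partial derivatives (coefficientwise in $x$). $\overline{\mathcal E}$ is the $\overline K$-space of polynomials in $y$ of degree $<n$, with basis $\varepsilon_i=\prod_{j\ne i}(y-a_j)$; $\overline{\mathcal F}=\{\sum u_i\varepsilon_i:\sum u_i=0\}$, the polynomials of degree $<n-1$. *)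

(* Defs.v *)
From HB Require Import structures.
From mathcomp Require Import all_boot all_order all_algebra.
Set Implicit Arguments. Unset Strict Implicit. Unset Printing Implicit Defensive.
Import GRing.Theory.
Local Open Scope ring_scope.

(* A derivation on a field K (plays the role of ' = d/dx on \overline K). *)
Definition is_derivation (K : fieldType) (D : K -> K) : Prop :=
  (forall x y, D (x + y) = D x + D y) /\ (forall x y, D (x * y) = D x * y + x * D y).

Definition fpoly (K : fieldType) (n : nat) (a : 'I_n -> K) : {poly K} :=
  \prod_(i < n) ('X - (a i)%:P).

Definition eps (K : fieldType) (n : nat) (a : 'I_n -> K) (i : 'I_n) : {poly K} :=
  \prod_(j < n | j != i) ('X - (a j)%:P).

(* f'_x : the derivation applied coefficientwise *)
Definition dx (K : fieldType) (D : K -> K) (p : {poly K}) : {poly K} := map_poly D p.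

(* Main.v *)
Require Import Defs.
From HB Require Import structures.
From mathcomp Require Import all_boot all_order all_algebra.
From mathcomp Require Import ring.
Import GRing.Theory.
Local Open Scope ring_scope.
Set Implicit Arguments. Unset Strict Implicit.

Lemma leib_prod (R : comNzRingType) (I : finType) (d : R -> R)
  (hadd : forall x y, d (x + y) = d x + d y)
  (hmul : forall x y, d (x * y) = d x * y + x * d y)
  (F : I -> R) (A : {set I}) :
  d (\prod_(j in A) F j) = \sum_(i in A) d (F i) * \prod_(j in A :\ i) F j.
Proof.
have d1 : d 1 = 0.
  have := hmul 1 1; rewrite !mulr1 mul1r => h.
  by apply: (@addrI _ (d 1)); rewrite addr0 -h.
have [m hm] : exists m, (#|A| < m)%N by exists #|A|.+1.
elim: m A hm => // m IH A hA.
case: (set_0Vmem A) => [->|[i0 Hi0]].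
  by rewrite !big_set0.
rewrite (big_setD1 i0 Hi0) /= hmul IH; last first.
  by rewrite -ltnS (leq_trans _ hA) // ltnS (cardsD1 i0 A) Hi0.
rewrite [in RHS](big_setD1 i0 Hi0) /= mulr_sumr; congr (_ + _).
apply: eq_bigr => i; rewrite !inE => /andP[ni Ai].
have H : i0 \in A :\ i by rewrite !inE eq_sym ni.
rewrite (big_setD1 i0 H) /= mulrCA; congr (_ * (_ * _)).
by apply: eq_bigl => j; rewrite !inE; do 2 case: (_ == _).
Qed.
Section Der.
Variables (K : fieldType) (D : K -> K) (hD : is_derivation D).

Lemma der0 : D 0 = 0.
Proof.
case: hD => ha _; have := ha 0 0; rewrite addr0 => h.
by apply: (@addrI _ (D 0)); rewrite addr0 -h.
Qed.

Lemma derN x : D (- x) = - D x.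
Proof.
case: hD => ha _; apply: (@addrI _ (D x)); by rewrite -ha !subrr der0.
Qed.

Lemma der1 : D 1 = 0.
Proof.
case: hD => _ hm; have := hm 1 1; rewrite !mulr1 mul1r => h.
by apply: (@addrI _ (D 1)); rewrite addr0 -h.
Qed.

Lemma dxD p q : dx D (p + q) = dx D p + dx D q.
Proof.
case: hD => ha _; apply/polyP => k.
by rewrite coefD !coef_map_id0 ?der0 // coefD ha.
Qed.

Lemma dxM p q : dx D (p * q) = dx D p * q + p * dx D q.
Proof.
case: hD => ha hm; apply/polyP => k.
rewrite coefD !coefM coef_map_id0 ?der0 // coefM.
rewrite (big_morph D ha der0) -big_split /=; apply: eq_bigr => i _.
by rewrite hm !coef_map_id0 ?der0.
Qed.

Lemma dxXsubC c : dx D ('X - c%:P) = - (D c)%:P.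
Proof.
apply/polyP => k.
rewrite coef_map_id0 ?der0 // coefB coefX !coefC coefN coefC.
case: k => [|[|k]] /=; rewrite ?sub0r ?subr0 ?derN ?der1 ?der0 ?oppr0 //.
Qed.

End Der.

Section Eps.
Variables (K : fieldType) (n : nat) (a : 'I_n -> K) (ha : injective a).

Lemma epsE i : eps a i = \prod_(j in [set: 'I_n] :\ i) ('X - (a j)%:P).
Proof. by apply: eq_bigl => j; rewrite !inE andbT. Qed.

Lemma fE : fpoly a = \prod_(j in [set: 'I_n]) ('X - (a j)%:P).
Proof. by apply: eq_bigl => j; rewrite !inE. Qed.

Lemma fderiv : (fpoly a)^`() = \sum_i eps a i.
Proof.
rewrite fE (@leib_prod _ _ deriv) => [||x y]; last by rewrite derivM addrC.
- by apply: eq_big => [i|i _]; rewrite ?inE // derivXsubC mul1r epsE.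
- exact: derivD.
Qed.

Lemma fdx D : is_derivation D -> dx D (fpoly a) = \sum_i (- D (a i)) *: eps a i.
Proof.
move=> hD; rewrite fE (@leib_prod _ _ (dx D)).
- apply: eq_big => [i|i _]; first by rewrite inE.
  by rewrite dxXsubC // epsE -mul_polyC polyCN.
- by move=> x y; apply: dxD.
- by move=> x y; apply: dxM.
Qed.

Lemma eps_root i k : i != k -> (eps a i).[a k] = 0.
Proof.
move=> ik; rewrite epsE horner_prod (big_setD1 k) /=; last by rewrite !inE eq_sym ik.
by rewrite hornerXsubC subrr mul0r.
Qed.

Lemma E_neq0 k : (eps a k).[a k] != 0.
Proof.
rewrite /eps horner_prod; apply/prodf_neq0 => j jk.
by rewrite hornerXsubC subr_eq0; apply: contra jk => /eqP /ha ->.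
Qed.

Lemma evalS (s : 'I_n -> K) k :
  (\sum_i s i *: eps a i).[a k] = s k * (eps a k).[a k].
Proof.
rewrite horner_sum (bigD1 k) //= hornerZ big1 ?addr0 // => i ik.
by rewrite hornerZ eps_root ?mulr0.
Qed.

Lemma size_eps i : (size (eps a i) <= n)%N.
Proof.
rewrite /eps -big_filter -(big_map a predT (fun x => 'X - x%:P)) size_prod_XsubC.
rewrite size_map size_filter.
have -> : count (fun j => j != i) (index_enum 'I_n) = #|predC1 i|.
  by rewrite cardE /enum_mem size_filter.
rewrite cardC1 card_ord; case: n i => [[]//|m] i //.
Qed.


Definition ee i j := \prod_(k in [set: 'I_n] :\ i :\ j) ('X - (a k)%:P).

Lemma eps_split i j : j != i -> eps a i = ('X - (a j)%:P) * ee i j.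
Proof. by move=> ji; rewrite epsE (big_setD1 j) // !inE ji. Qed.

Lemma epsM i j : j != i -> eps a i * eps a j = ee i j * fpoly a.
Proof.
move=> ji; rewrite (eps_split ji) fE (big_setD1 j) ?inE //= -epsE.
by rewrite mulrCA mulrA.
Qed.

Lemma ee_sym i j : ee i j = ee j i.
Proof. by apply: eq_bigl => x; rewrite !inE; do 2 case: (_ == _). Qed.

Lemma ee_root i j k : k != i -> k != j -> (ee i j).[a k] = 0.
Proof.
move=> ki kj; rewrite horner_prod (big_setD1 k) /=; last by rewrite !inE ki kj.
by rewrite hornerXsubC subrr mul0r.
Qed.

Lemma ee_at i j : j != i -> (ee i j).[a i] = (eps a i).[a i] / (a i - a j).
Proof.
move=> ji; have hij : a i - a j != 0.
  by rewrite subr_eq0; apply: contra ji => /eqP /ha ->.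
by rewrite (eps_split ji) hornerM hornerXsubC [(a i - a j) * _]mulrC mulfK.
Qed.

Lemma f_root k : (fpoly a).[a k] = 0.
Proof.
by rewrite fE horner_prod (big_setD1 k) ?inE //= hornerXsubC subrr mul0r.
Qed.

Lemma f_neq0 : fpoly a != 0.
Proof. by rewrite /fpoly; apply/prodf_neq0 => j _; rewrite polyXsubC_eq0. Qed.

End Eps.

Unset Implicit Arguments.

Theorem mainTheorem16 (K : fieldType) (D : K -> K) (hD : is_derivation D)
  (n : nat) (hn : (2 <= n)%N) (a : 'I_n -> K) (ha : injective a)
  (wc : 'I_n -> K) (hw : \sum_(i < n) wc i = 0)
  (uc : 'I_n -> K) (v : {poly K}) (hv : (size v <= n)%N) :
  let f := fpoly a in
  let u := \sum_(i < n) uc i *: eps a i in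
  let w := \sum_(i < n) wc i *: eps a i in
  u * dx D f + v * f^`() = w * f ->
  v = \sum_(i < n) (uc i * D (a i)) *: eps a i /\
  (forall i : 'I_n,
     wc i = (\sum_(j < n | j != i) (D (a i) - D (a j)) / (a i - a j)) * uc i
            - \sum_(j < n | j != i) (D (a i) - D (a j)) / (a i - a j) * uc j).
Proof.
move=> f u w H.
have hf' := fderiv a; have hdx := fdx a hD.
have hsz : forall s : 'I_n -> K, (size (\sum_i s i *: eps a i)%R <= n)%N.
  move=> s; apply: (big_ind (fun p : {poly K} => (size p <= n)%N)).
  - by rewrite size_poly0.
  - move=> p q hp hq; have h := size_polyD p q; apply: leq_trans h _; by rewrite geq_max hp hq.
  - by move=> i _; have h := size_scale_leq (s i) (eps a i); exact: leq_trans h (size_eps a i).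
have hs : forall k, (\sum_i eps a i).[a k] = (eps a k).[a k].
  move=> k; rewrite (eq_bigr (fun i => 1 *: eps a i)) ?evalS ?mul1r // => i _.
  by rewrite scale1r.
have hvE : v = \sum_(i < n) (uc i * D (a i)) *: eps a i.
  apply/eqP; rewrite -subr_eq0; apply/eqP.
  apply: (@roots_geq_poly_eq0 _ _ (map a (enum 'I_n))).
  - apply/allP => x /mapP [k _ ->].
    have := congr1 (fun p => p.[a k]) H.
    rewrite /= /f hf' hdx !hornerD !hornerM f_root mulr0 !evalS // hs.
    move=> h; rewrite /root hornerD hornerN evalS // subr_eq0; apply/eqP.
    apply: (mulIf (E_neq0 ha k)).
    have -> : v.[a k] * (eps a k).[a k] =
       - (uc k * (eps a k).[a k] * (- D (a k) * (eps a k).[a k])).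
      by apply/eqP; rewrite -addr_eq0 addrC h.
    ring.
  - by rewrite map_inj_uniq ?enum_uniq.
  - rewrite size_map size_enum_ord.
    have h := size_polyD v (- \sum_(i < n) (uc i * D (a i)) *: eps a i); apply: leq_trans h _; rewrite size_polyN geq_max hv.
    exact: hsz.
split=> // k.
pose W := \sum_i \sum_j (uc i * (D (a i) - D (a j))) *: ee a i j.
have hwW : w = W.
  apply: (mulIf (f_neq0 a)); rewrite -H hvE /u /W hdx hf' !mulr_suml -big_split /=.
  apply: eq_bigr => i _; rewrite !mulr_sumr -big_split /= mulr_suml.
  apply: eq_bigr => j _.
  rewrite -scalerAr -!scalerAl scalerA -scalerDl.
  case: (eqVneq j i) => [->|ji].
    by rewrite subrr mulr0 scale0r mulrC -mulrDr addNr mulr0 scale0r.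
  by rewrite epsM //; congr (_ *: _); ring.
apply: (mulIf (E_neq0 ha k)).
have -> : wc k * (eps a k).[a k] = W.[a k] by rewrite -hwW /w evalS.
rewrite /W horner_sum (bigD1 k) //= horner_sum (bigD1 k) //= hornerZ subrr mulr0 mul0r add0r.
rewrite mulrBl !mulr_suml -sumrN; congr (_ + _); apply: eq_bigr => i ik.
  by rewrite hornerZ (ee_at ha ik); ring.
rewrite horner_sum (bigD1 k) //= big1 ?addr0; last first.
  move=> j jk; rewrite hornerZ ee_root ?mulr0 //; by rewrite eq_sym.
by rewrite hornerZ ee_sym (ee_at ha ik); ring.
Qed.
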